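(* Let $\mathcal{C}$ be an exact-repair regenerating code with parameters $\{(n=d+1,k,d),(\alpha,\beta),B\}$, where $\alpha=(d-p+1)\beta-\theta$ with $p\in\{1,\dots,k\}$, $\theta\in[0,\beta)$ ($\theta=0$ if $p=k$), and let $\epsilon=\hat B-B$. Let $1\le i\le j\le k$, $L=[i\ j]$, and $$\mathcal{S}=\{S_{i+1}^{i}\}\cup S_{i+2}^{[i\ i+1]}\cup\cdots\cup S_{j}^{[i\ j-1]}\cup S_{[j+1\ d+1]}^{L},$$ i.e. $\mathcal{S}=\{S_x^y : y\in L,\ x\in[d+1],\ x>y\}$. Then $$H(\mathcal{S})\ \ge\ \sum_{\ell=i}^{j}\min\{\alpha,(d-\ell+1)\beta\}-\epsilon .$$
   Context: Setting: fix integers $1\le k\le d$, let $n=d+1$, a finite field $\mathbb{F}_q$, and reals $\alpha,\beta>0$. An exact-repair regenerating code with parameters $\{(n,k,d),(\alpha,\beta),B\}$: a file $M$ uniformly distributed over $\mathbb{F}_q^B$ (entropies are measured in units of $\log q$); node $i\in[n]$ stores $W_i$, a deterministic function of $M$, with $H(W_i)\le\alpha$; (data collection) for every $K\subseteq[n]$ with $|K|=k$, $M$ is a function of $(W_a)_{a\in K}$; (exact repair) since $n=d+1$, the helper set of node $y$ is $[n]\setminus\{y\}$: each $x\ne y$ sends helper data $S_x^y$, a deterministic function of $W_x$ with $H(S_x^y)\le\beta$, and $W_y$ is a function of $(S_x^y)_{x\neq y}$. Notation: $[i]=\{1,\dots,i\}$, $[i\ j]=\{i,i+1,\dots,j\}$;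 for $A\subseteq[n]$, $W_A=(W_a)_{a\in A}$; for $X,Y\subseteq[n]$, $S_X^Y=\{S_x^y: x\in X, y\in Y, x\ne y\}$; $S_x^Y=S_{\{x\}}^Y$. The functional-repair optimal file size is $\hat B=\sum_{i=1}^k\min\{\alpha,(d-i+1)\beta\}=p\alpha+\sum_{i=p+1}^k(d-i+1)\beta$, and $\epsilon:=\hat B-B$. *)

(* Defs.v *)
From Stdlib Require Import Reals.
From mathcomp Require Import all_boot all_algebra.

Set Implicit Arguments.
Unset Strict Implicit.
Unset Printing Implicit Defensive.

Local Open Scope R_scope.

(* Entropy, measured in units of log q, of a random variable f(M) where M is
   uniformly distributed on the finite type T:
   H(f(M)) = sum_t (1/|T|) * log_q (|T| / |{t' | f t' = f t}|). *)
Definition entropy (q : nat) (T : finType) (U : eqType) (f : T -> U) : R :=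
  \big[Rplus/R0]_(t : T)
     ((ln (INR #|T|) - ln (INR #|[set t' | f t' == f t]|))
        / (INR #|T| * ln (INR q))).

Definition file (F : finFieldType) (B : nat) := {ffun 'I_B -> F}.

Definition Wjoint (F : finFieldType) (B n : nat) (Wt : eqType)
  (W : 'I_n -> {ffun 'I_B -> F} -> Wt) (K : {set 'I_n}) (m : {ffun 'I_B -> F})
  : {ffun 'I_n -> option Wt} :=
  [ffun a => if a \in K then Some (W a m) else None].

Definition Sjoint (F : finFieldType) (B n : nat) (Wt St : eqType)
  (W : 'I_n -> {ffun 'I_B -> F} -> Wt) (h : 'I_n -> 'I_n -> Wt -> St)
  (P : {set 'I_n * 'I_n}) (m : {ffun 'I_B -> F})
  : {ffun 'I_n * 'I_n -> option St} :=
  [ffun e => if e \in P then Some (h e.1 e.2 (W e.1 m)) else None].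

Definition helpers (F : finFieldType) (B n : nat) (Wt St : eqType)
  (W : 'I_n -> {ffun 'I_B -> F} -> Wt) (h : 'I_n -> 'I_n -> Wt -> St)
  (y : 'I_n) (m : {ffun 'I_B -> F}) : {ffun 'I_n -> option St} :=
  [ffun x => if x != y then Some (h x y (W x m)) else None].

(* Exact-repair regenerating code with parameters (n = d+1, k, d), (alpha, beta), B
   over the finite field F (q = #|F|): node i stores W i M, a deterministic
   function of M; node x sends S_x^y = h x y (W x M) to repair node y. *)
Definition ER_code (F : finFieldType) (k d : nat) (alpha beta : R) (B : nat)
  (Wt St : eqType) (W : 'I_d.+1 -> {ffun 'I_B -> F} -> Wt)
  (h : 'I_d.+1 -> 'I_d.+1 -> Wt -> St) : Prop :=
  (forall a, entropy #|F| (W a) <= alpha) /\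
  (forall K : {set 'I_d.+1}, #|K| = k ->
     exists dec : {ffun 'I_d.+1 -> option Wt} -> {ffun 'I_B -> F},
       forall m, dec (Wjoint W K m) = m) /\
  (forall x y : 'I_d.+1, x != y ->
     entropy #|F| (fun m : {ffun 'I_B -> F} => h x y (W x m)) <= beta) /\
  (forall y : 'I_d.+1,
     exists rep : {ffun 'I_d.+1 -> option St} -> Wt,
       forall m, rep (helpers W h y m) = W y m).

(* Functional-repair optimal file size  B^ = sum_{i=1}^k min(alpha, (d-i+1) beta). *)
Definition Bhat (k d : nat) (alpha beta : R) : R :=
  \big[Rplus/R0]_(1 <= i < k.+1) Rmin alpha (INR (addn (subn d i) 1) * beta).

(* Main.v *)
Require Import Defs.
From Stdlib Require Import Reals Lra.
From mathcomp Require Import all_boot all_algebra.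
From mathcomp Require Import all_order Rstruct.
Set Implicit Arguments. Unset Strict Implicit. Unset Printing Implicit Defensive.
Import Order.TTheory GRing.Theory Num.Theory.
Local Open Scope R_scope.

Lemma ln_le' x y : 0 < x -> x <= y -> ln x <= ln y.
Proof. move=> hx [hxy|->]; [left; exact: ln_increasing | right; reflexivity]. Qed.

Lemma ln_le_sub1 x : 0 < x -> ln x <= x - 1.
Proof. move=> hx; have := exp_ineq1_le (ln x); rewrite exp_ln //; lra. Qed.

Lemma big_Rle (I : finType) (P : pred I) (F G : I -> R) :
  (forall i, P i -> F i <= G i) ->
  \big[Rplus/R0]_(i | P i) F i <= \big[Rplus/R0]_(i | P i) G i.
Proof.
move=> H; apply: (big_ind2 (fun a b => a <= b)) => //.
- exact: Rle_refl.
- by move=> *; apply: Rplus_le_compat.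
Qed.

Lemma iter_Rplus n c : iter n (Rplus c) R0 = INR n * c.
Proof. elim: n => [|n IH]; first (simpl; lra). rewrite iterS IH S_INR; lra. Qed.
Lemma sum_constR (T : finType) c : \big[Rplus/R0]_(t : T) c = INR #|T| * c.
Proof.
rewrite big_const_seq count_predT iter_Rplus.
move/card_uniqP: (index_enum_uniq T) => <-.
by congr (INR _ * _); apply: eq_card => x; rewrite mem_index_enum.
Qed.

Ltac pos := repeat (first [assumption | apply Rmult_lt_0_compat | apply Rinv_0_lt_compat]).

Section Ent.
Variables (T : finType) (q : nat).
Hypothesis Hq : (1 < q)%N.
Hypothesis HT : (0 < #|T|)%N.

Definition cnt (U : eqType) (f : T -> U) t := #|[set t' | f t' == f t]|.
Lemma cnt_gt0 (U : eqType) (f : T -> U) t : (0 < cnt f t)%N.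
Proof. by apply/card_gt0P; exists t; rewrite inE. Qed.
Lemma cnt_pos (U : eqType) (f : T -> U) t : 0 < INR (cnt f t).
Proof. apply: lt_0_INR; apply/ssrnat.ltP; exact: cnt_gt0. Qed.
Lemma N_pos : 0 < INR #|T|.
Proof. apply: lt_0_INR; exact/ssrnat.ltP. Qed.

Definition E' (U : eqType) (f : T -> U) :=
  \big[Rplus/R0]_t (ln (INR #|T|) - ln (INR (cnt f t))).

Lemma Dpos : 0 < INR #|T| * ln (INR q).
Proof.
apply: Rmult_lt_0_compat; first exact: N_pos.
rewrite -ln_1; apply: ln_increasing; first lra.
change 1 with (INR 1); apply: lt_INR; exact/ssrnat.ltP.
Qed.

Lemma entropyE (U : eqType) (f : T -> U) :
  entropy q f = E' f / (INR #|T| * ln (INR q)).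
Proof. by rewrite /entropy /E' /Rdiv big_distrl. Qed.

Lemma E'_mono (U V : eqType) (f : T -> U) (g : T -> V) :
  (forall t t', f t = f t' -> g t = g t') -> E' g <= E' f.
Proof.
move=> H; apply: big_Rle => t _.
suff : ln (INR (cnt f t)) <= ln (INR (cnt g t)) by lra.
apply: ln_le'; first exact: cnt_pos.
apply: le_INR; apply/ssrnat.leP; apply: subset_leq_card; apply/subsetP => t'.
by rewrite !inE => /eqP /H ->.
Qed.

Lemma entropy_mono (U V : eqType) (f : T -> U) (g : T -> V) :
  (forall t t', f t = f t' -> g t = g t') -> entropy q g <= entropy q f.
Proof.
move=> H; rewrite !entropyE /Rdiv; apply: Rmult_le_compat_r.
- by apply: Rlt_le; apply: Rinv_0_lt_compat; exact: Dpos.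
- exact: E'_mono.
Qed.


Lemma sum_ind_le1 (P : {set T}) :
  (\sum_t (if t \in P then (#|P|%:R)^-1 else 0) <= 1 :> R)%R.
Proof.
rewrite -big_mkcond /= sumr_const.
have [->|nz] := eqVneq #|P| 0%N; first by rewrite mulr0n ler01.
by rewrite -[(_^-1 *+ _)%R]mulr_natr mulVf ?lexx // pnatr_eq0.
Qed.

Lemma key (U V : eqType) (f : T -> U) (g : T -> V) :
  (\sum_t (cnt f t)%:R * (cnt g t)%:R / (cnt (fun x => (f x, g x)) t)%:R
     <= (#|T| * #|T|)%:R :> R)%R.
Proof.
set fg := fun x => (f x, g x).
have E1 t : ((cnt f t)%:R * (cnt g t)%:R / (cnt fg t)%:R =
   \sum_(uv : T * T) (if (f uv.1 == f t) && (g uv.2 == g t)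
                      then ((cnt fg t)%:R)^-1 else 0) :> R)%R.
  rewrite -big_mkcond /= -natrM /cnt -cardsX.
  rewrite (eq_bigl (fun uv => uv \in setX [set t' | f t' == f t] [set t' | g t' == g t])).
    by rewrite sumr_const mulr_natl.
  by move=> [u v]; rewrite !inE.
rewrite (eq_bigr _ (fun t _ => E1 t)) exchange_big /=.
rewrite -card_prod -sum1_card natr_sum.
apply: ler_sum => -[u v] _ /=.
set P := [set t | (f t == f u) && (g t == g v)].
apply: le_trans (sum_ind_le1 P).
rewrite le_eqVlt; apply/orP; left; apply/eqP.
apply: eq_bigr => t _.
have -> : ((f u == f t) && (g v == g t)) = (t \in P) by rewrite inE eq_sym [g v == _]eq_sym.
case: ifP => // tP; suff -> : cnt fg t = #|P| by [].
rewrite /cnt; apply: eq_card => t'.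
move: tP; rewrite !inE /fg xpair_eqE => /andP [/eqP -> /eqP ->] //.
Qed.


Lemma keyR (U V : eqType) (f : T -> U) (g : T -> V) :
  \big[Rplus/R0]_t (INR (cnt f t) * INR (cnt g t) / INR (cnt (fun x => (f x, g x)) t))
    <= INR #|T| * INR #|T|.
Proof.
have := key f g; rewrite natrM -!INRE => /RleP H.
apply: Rle_trans H; right; apply: eq_bigr => t _; by rewrite !INRE.
Qed.


Lemma E'_sub (U V : eqType) (f : T -> U) (g : T -> V) :
  E' (fun x => (f x, g x)) <= E' f + E' g.
Proof.
set N := INR #|T|. set fg := fun x => (f x, g x).
have HN : 0 < N := N_pos.
set y := fun t => INR (cnt f t) * INR (cnt g t) / INR (cnt fg t).
set a := fun t => (ln N - ln (INR (cnt fg t))) -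
   ((ln N - ln (INR (cnt f t))) + (ln N - ln (INR (cnt g t)))).
have pt t : a t <= y t / N - 1.
  have h1 := cnt_pos f t; have h2 := cnt_pos g t; have h3 := cnt_pos fg t.
  have hx : 0 < y t / N by rewrite /y /Rdiv; pos.
  have := ln_le_sub1 hx.
  rewrite /y /Rdiv ln_mult; [|pos|pos].
  rewrite ln_mult; [|pos|pos].
  rewrite ln_mult; [|pos|pos].
  rewrite !ln_Rinv //. rewrite /a; lra.
have s1 : \big[Rplus/R0]_t a t <= \big[Rplus/R0]_t (y t / N - 1)
  by apply: big_Rle => t _; exact: pt.
have e1 : \big[Rplus/R0]_t (y t / N - 1) = (\big[Rplus/R0]_t y t) / N - N.
  rewrite /Rminus big_split /= sum_constR /Rdiv -big_distrl /= -/N.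
  rewrite -Ropp_mult_distr_r Rmult_1_r; reflexivity.
have e2 : E' fg = \big[Rplus/R0]_t a t + (E' f + E' g).
  rewrite /E' -big_split -big_split /=; apply: eq_bigr => t _; rewrite /a; set L := ln N; lra.
have k : \big[Rplus/R0]_t y t <= N * N by exact: keyR.
have k2 : \big[Rplus/R0]_t y t / N <= N.
  apply: (Rmult_le_reg_r N) => //.
  rewrite /Rdiv Rmult_assoc Rinv_l; lra.
rewrite -/fg e2; lra.
Qed.

Lemma entropy_sub (U V : eqType) (f : T -> U) (g : T -> V) :
  entropy q (fun x => (f x, g x)) <= entropy q f + entropy q g.
Proof.
rewrite !entropyE /Rdiv -Rmult_plus_distr_r; apply: Rmult_le_compat_r.
- by apply: Rlt_le; apply: Rinv_0_lt_compat; exact: Dpos.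
- exact: E'_sub.
Qed.

Lemma entropy_const (U : eqType) (f : T -> U) :
  (forall t t', f t = f t') -> entropy q f = 0.
Proof.
move=> H; rewrite entropyE /E'.
rewrite (eq_bigr (fun _ => 0)); last first.
  move=> t _; rewrite /cnt (_ : [set t' | f t' == f t] = setT) ?cardsT; first lra.
  by apply/setP => t'; rewrite !inE (H t' t) eqxx.
rewrite sum_constR /Rdiv; lra.
Qed.

Lemma entropy_id :
  entropy q (fun t : T => t) = ln (INR #|T|) / ln (INR q).
Proof.
rewrite entropyE /E'.
rewrite (eq_bigr (fun _ => ln (INR #|T|))); last first.
  move=> t _; rewrite /cnt (_ : [set t' | t' == t] = [set t]) ?cards1; first by rewrite ln_1; lra.
  by apply/setP => t'; rewrite !inE.
have HN := N_pos.
have Hl : 0 < ln (INR q).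
  rewrite -ln_1; apply: ln_increasing; first lra.
  change 1 with (INR 1); apply: lt_INR; exact/ssrnat.ltP.
rewrite sum_constR; field.
split; first [exact (Rgt_not_eq _ _ HN) | exact (Rgt_not_eq _ _ Hl)].
Qed.

End Ent.

From mathcomp Require Import zify.

Lemma card_lt n m : (m <= n)%N -> #|[set a : 'I_n | (a < m)%N]| = m.
Proof.
move=> Hmn.
have -> : [set a : 'I_n | (a < m)%N] = [set widen_ord Hmn a | a : 'I_m].
  apply/setP => a; rewrite inE; apply/idP/imsetP.
  - by move=> ha; exists (Ordinal ha) => //; apply: val_inj.
  - by move=> [b _ ->] /=.
rewrite card_imset ?card_ord //.
by move=> a b /(congr1 val) /= ab; apply: val_inj.
Qed.

Lemma card_gt n (y0 : 'I_n) : #|[set x : 'I_n | (y0 < x)%N]| = (n - y0.+1)%N.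
Proof.
rewrite cardsCs card_ord; congr (_ - _)%N.
rewrite -[RHS](card_lt (ltn_ord y0)); apply: eq_card => x; rewrite !inE.
by rewrite ltnNge negbK ltnS.
Qed.

Section Code.
Variables (F : finFieldType) (k d : nat) (alpha beta : R) (B : nat)
  (Wt St : eqType) (W : 'I_d.+1 -> {ffun 'I_B -> F} -> Wt)
  (h : 'I_d.+1 -> 'I_d.+1 -> Wt -> St).
Hypothesis Hcode : @ER_code F k d alpha beta B Wt St W h.

Local Notation TT := {ffun 'I_B -> F}.
Local Notation q := #|F|.

Lemma Hq : (1 < q)%N. Proof. exact: card_finNzRing_gt1. Qed.
Lemma HT : (0 < #|TT|)%N. Proof. by rewrite card_ffun expn_gt0 (ltn_trans _ Hq). Qed.

Local Notation ent := (@entropy q TT _).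

Definition Pw (a : nat) := Wjoint W [set x : 'I_d.+1 | (x < a)%N].
Definition Sset (i j : nat) : {set 'I_d.+1 * 'I_d.+1} :=
  [set e : 'I_d.+1 * 'I_d.+1 | (i <= e.2.+1 <= j)%N && (e.2 < e.1)%N].

Lemma Pw0 : ent (Pw 0) = 0.
Proof.
apply: entropy_const => m m'; apply/ffunP => a.
by rewrite !ffunE inE.
Qed.

Lemma determ (i j : nat) m m' : (1 <= i)%N ->
  Pw i.-1 m = Pw i.-1 m' -> Sjoint W h (Sset i j) m = Sjoint W h (Sset i j) m' ->
  Pw j m = Pw j m'.
Proof.
move=> Hi HP HS.
suff H : forall c (y : 'I_d.+1), (y < c)%N -> (y < j)%N -> W y m = W y m'.
  apply/ffunP => a; rewrite !ffunE inE; case: ifP => // ha.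
  by rewrite (H a.+1 a).
elim=> [//|c IH] y; rewrite ltnS => yc yj.
case: (ltnP y i.-1) => yi.
  move/ffunP: HP => /(_ y); rewrite !ffunE inE yi; by case.
have [rep Hrep] := Hcode.2.2.2 y.
rewrite -(Hrep m) -(Hrep m'); congr rep.
apply/ffunP => x; rewrite !ffunE; case: ifP => // xy.
case: (ltngtP x y) => xy'.
- by rewrite (IH x) //; lia.
- move/ffunP: HS => /(_ (x, y)); rewrite !ffunE inE /= xy' andbT.
  have -> : (i <= y.+1 <= j)%N by apply/andP; split; lia.
  by case=> ->.
- by move: xy; rewrite (val_inj xy') eqxx.
Qed.


Lemma Sjoint_bound (P : {set 'I_d.+1 * 'I_d.+1}) :
  (forall e, e \in P -> e.1 != e.2) -> ent (Sjoint W h P) <= INR #|P| * beta.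
Proof.
move=> HP; have [c Pc] : exists c, #|P| = c by exists #|P|.
elim: c P Pc HP => [|c IH] P Pc HP.
  rewrite Pc entropy_const; first by simpl; lra.
  move=> m m'; apply/ffunP => e; rewrite !ffunE.
  by move/eqP: Pc; rewrite cards_eq0 => /eqP ->; rewrite inE.
have [e eP] : exists e, e \in P by apply/set0Pn; rewrite -card_gt0 Pc.
set P' := P :\ e.
have cP' : #|P'| = c by move: Pc; rewrite (cardsD1 e P) eP; case.
apply: (@Rle_trans _ (ent (fun m => (Sjoint W h P' m, h e.1 e.2 (W e.1 m))))).
  apply: (entropy_mono Hq HT) => m m' [e1 e2]; apply/ffunP => e'; rewrite !ffunE.
  case: (eqVneq e' e) => [->|ne]; first by rewrite eP e2.
  move/ffunP: e1 => /(_ e'); rewrite !ffunE !inE ne /=.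
  by case: (e' \in P) => // -[->].
apply: Rle_trans (entropy_sub Hq HT _ _) _.
have := IH P' cP' (fun e' He' => HP e' (subsetP (subsetDl _ _) _ He')).
have := Hcode.2.2.1 e.1 e.2 (HP e eP).
rewrite cP' Pc S_INR => H1 H2.
set X := entropy _ (fun m : TT => h e.1 e.2 (W e.1 m)) in H1 *.
set Y := entropy _ (Sjoint W h P') in H2 *. lra.
Qed.

Lemma step l : (1 <= l <= d)%N ->
  ent (Pw l) <= ent (Pw l.-1) + Rmin alpha (INR (addn (subn d l) 1) * beta).
Proof.
move=> /andP [l1 ld].
have hy : (l.-1 < d.+1)%N by lia.
set y0 := Ordinal hy.
have A1 : ent (Pw l) <= ent (Pw l.-1) + alpha.
  apply: (@Rle_trans _ (ent (fun m => (Pw l.-1 m, W y0 m)))).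
    apply: (entropy_mono Hq HT) => m m' [e1 e2]; apply/ffunP => a; rewrite !ffunE !inE.
    case: (ltnP a l.-1) => ha.
      have -> : (a < l)%N by lia.
      by move/ffunP: e1 => /(_ a); rewrite !ffunE !inE ha.
    case: ifP => // al.
    have -> : a = y0 by apply: val_inj => /=; lia.
    by rewrite e2.
  apply: Rle_trans (entropy_sub Hq HT _ _) _.
  have H1 : ent (fun m => W y0 m) <= alpha := Hcode.1 y0.
  by apply: Rplus_le_compat_l.
have A2 : ent (Pw l) <= ent (Pw l.-1) + INR (addn (subn d l) 1) * beta.
  apply: (@Rle_trans _ (ent (fun m => (Pw l.-1 m, Sjoint W h (Sset l l) m)))).
    apply: (entropy_mono Hq HT) => m m' [e1 e2]; exact: determ e1 e2.
  apply: Rle_trans (entropy_sub Hq HT _ _) _.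
  have : ent (Sjoint W h (Sset l l)) <= INR #|Sset l l| * beta.
    apply: Sjoint_bound => e; rewrite inE => /andP [_ lt]; apply/eqP => E.
    by rewrite E ltnn in lt.
  have -> : #|Sset l l| = addn (subn d l) 1.
    have -> : Sset l l = setX [set x : 'I_d.+1 | (y0 < x)%N] [set y0].
      apply/setP => -[x y]; rewrite !inE /=.
      apply/idP/idP => [/andP [/andP [a b] c]|/andP [a /eqP ->]].
        have yy : y = y0 by apply: val_inj => /=; lia.
        rewrite -yy eqxx andbT; lia.
      apply/andP; split; [apply/andP; split|] => /=; lia.
    rewrite cardsX cards1 card_gt /=; lia.
  by move=> H; apply: Rplus_le_compat_l.
suff : ent (Pw l) - ent (Pw l.-1) <= Rmin alpha (INR (addn (subn d l) 1) * beta) by lra.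
apply: Rmin_glb; lra.
Qed.

Lemma tele a b : (a <= b)%N -> (b <= d)%N ->
  ent (Pw b) <= ent (Pw a) +
    \big[Rplus/R0]_(a.+1 <= l < b.+1) Rmin alpha (INR (addn (subn d l) 1) * beta).
Proof.
elim: b => [|b IH] ab bd.
  have a0 : a = 0%N by lia.
  by rewrite a0 big_geq //; lra.
case: (ltngtP a b.+1) => ab'.
- rewrite big_nat_recr /=; last by lia.
  have := IH ab' (ltnW bd).
  have := step (l := b.+1) (ltac:(lia)).
  simpl; lra.
- by exfalso; lia.
- by rewrite ab' big_geq //; lra.
Qed.

End Code.

Lemma INR_expn m n : INR (m ^ n)%N = INR m ^ n.
Proof. elim: n => [|n IH]; first by rewrite expn0. by rewrite expnS -multE mult_INR IH. Qed.

Theorem proposition1 (F : finFieldType) (k d p : nat) (alpha beta theta : R)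
  (B : nat) (Wt St : eqType) (W : 'I_d.+1 -> {ffun 'I_B -> F} -> Wt)
  (h : 'I_d.+1 -> 'I_d.+1 -> Wt -> St) (i j : nat) :
  (1 <= k <= d)%N ->
  Rlt R0 alpha -> Rlt R0 beta ->
  (1 <= p <= k)%N ->
  Rle R0 theta -> Rlt theta beta ->
  (p = k -> theta = R0) ->
  alpha = Rminus (Rmult (INR (addn (subn d p) 1)) beta) theta ->
  @ER_code F k d alpha beta B Wt St W h ->
  (1 <= i <= j)%N -> (j <= k)%N ->
  Rge (entropy #|F|
         (Sjoint W h [set e : 'I_d.+1 * 'I_d.+1 |
                        (i <= e.2.+1 <= j)%N && (e.2 < e.1)%N]))
      (Rminus (\big[Rplus/R0]_(i <= l < j.+1)
                 Rmin alpha (Rmult (INR (addn (subn d l) 1)) beta))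
              (Rminus (Bhat k d alpha beta) (INR B))).
Proof.
move=> /andP [k1 kd] _ _ _ _ _ _ _ Hcode /andP [i1 ij] jk.
have HqF := Hq F. have HTF := HT F B.
have HB : INR B <= entropy #|F| (Pw W k).
  have -> : INR B = entropy #|F| (fun m : {ffun 'I_B -> F} => m).
    rewrite (entropy_id HqF HTF) card_ffun card_ord INR_expn ln_pow; last first.
      apply: lt_0_INR; apply/ssrnat.ltP; exact: ltn_trans HqF.
    have : 0 < ln (INR #|F|).
      rewrite -ln_1; apply: ln_increasing; first lra.
      change 1 with (INR 1); apply: lt_INR; exact/ssrnat.ltP.
    move=> Hl; rewrite /Rdiv Rmult_assoc Rinv_r ?Rmult_1_r //; exact: Rgt_not_eq.
  apply: (entropy_mono HqF HTF) => m m' E.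
  have [dec Hdec] := Hcode.2.1 _ (card_lt (ltnW (leq_ltn_trans kd (ltnSn d)))).
  by rewrite -(Hdec m) -(Hdec m'); congr dec.
have T1 := tele Hcode jk kd.
have T3 := tele Hcode (leq0n i.-1) (ltac:(lia)).
rewrite Pw0 prednK // in T3.
have T2 : entropy #|F| (Pw W j) <= entropy #|F| (Pw W i.-1) +
   entropy #|F| (Sjoint W h (Sset d i j)).
  apply: (@Rle_trans _ (entropy #|F| (fun m => (Pw W i.-1 m, Sjoint W h (Sset d i j) m)))).
    apply: (entropy_mono HqF HTF) => m m' [e1 e2]; exact (determ Hcode i1 e1 e2).
  exact: (entropy_sub HqF HTF).
have Hsplit : Bhat k d alpha beta =
  \big[Rplus/R0]_(1 <= l < i) Rmin alpha (Rmult (INR (addn (subn d l) 1)) beta)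
  + (\big[Rplus/R0]_(i <= l < j.+1) Rmin alpha (Rmult (INR (addn (subn d l) 1)) beta)
     + \big[Rplus/R0]_(j.+1 <= l < k.+1) Rmin alpha (Rmult (INR (addn (subn d l) 1)) beta)).
  rewrite /Bhat (@big_cat_nat _ _ _ i 1 k.+1) //; last by lia.
  rewrite (@big_cat_nat _ _ _ j.+1 i k.+1) //; last by lia.
rewrite Hsplit.
rewrite /Sset in T2.
set Ek := entropy _ (Pw W k) in HB T1 *.
set Ej := entropy _ (Pw W j) in T1 T2 *.
set Ei := entropy _ (Pw W i.-1) in T2 T3 *.
set ES := entropy _ (Sjoint W h _) in T2 *.
apply: Rle_ge; lra.
Qed.
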